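(* There exists an $F_\sigma$ set $E\subseteq\mathbb{R}$ having strong uniform density type (SUDT) such that for every $G_\delta$ set $\widetilde{E}\subseteq\mathbb{R}$ with $|E\,\triangle\,\widetilde{E}|=0$, the set $\widetilde{E}$ does not have uniform density type (UDT).
   Context: $|A|$ denotes Lebesgue measure. For a measurable $E\subseteq\mathbb{R}$ and $\gamma,\delta>0$ let $E^{\gamma,\delta}=\{x\in\mathbb{R} : \forall r\in(0,\delta],\ \max\{|(x-r,x)\cap E|/r,\ |(x,x+r)\cap E|/r\}\ge\gamma\}$. A measurable set $E$ has uniform density type (UDT) if there exist sequences $\gamma_n\nearrow 1$ and $\delta_n\searrow 0$ (positive) such that $E\subseteq\bigcap_{k=1}^\infty\bigcup_{n=k}^\infty E^{\gamma_n,\delta_n}$. It has strong uniform density type (SUDT) if there exist sequences $\gamma_n\nearrow 1$ and $\delta_n\searrow 0$ such that $E\subseteq\bigcup_{k=1}^\infty\bigcap_{n=k}^\infty E^{\gamma_n,\delta_n}$. *)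

(* Defs.v *)
From mathcomp Require Import all_boot all_algebra all_classical all_reals all_analysis.
From mathcomp Require Import Rstruct Rstruct_topology borel_hierarchy.
Local Open Scope classical_set_scope.
Local Open Scope ring_scope.

Notation R := Rdefinitions.R.

(* The carrier of the (completed) Lebesgue measure on R, i.e. R equipped with
   the sigma-algebra of Lebesgue measurable sets. *)
Definition LebT : Type :=
  ltac:(let t := type of (@completed_lebesgue_measure R) in
        match t with set ?T -> _ => exact T end).

Definition leb (A : set R) : \bar R := @completed_lebesgue_measure R (A : set LebT).

Definition Lmeasurable (E : set R) : Prop := measurable (E : set LebT).

Definition Egd (E : set R) (g d : R) : set R :=
  [set x : R | forall r : R, 0 < r -> r <= d ->
     (g%:E <= maxe (leb (`](x - r)%R, x[ `&` E) * (r^-1)%:E)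
                   (leb (`]x, (x + r)%R[ `&` E) * (r^-1)%:E))%E].

Definition incr_to_one (g : nat -> R) : Prop :=
  (forall n, 0 < g n) /\ {homo g : m n / (m <= n)%N >-> m <= n} /\ g @ \oo --> (1 : R).

Definition decr_to_zero (d : nat -> R) : Prop :=
  (forall n, 0 < d n) /\ {homo d : m n / (m <= n)%N >-> n <= m} /\ d @ \oo --> (0 : R).

Definition UDT (E : set R) : Prop :=
  Lmeasurable E /\
  exists g d : nat -> R, incr_to_one g /\ decr_to_zero d /\
    E `<=` \bigcap_k \bigcup_(n in [set n | (k <= n)%N]) Egd E (g n) (d n).

Definition SUDT (E : set R) : Prop :=
  Lmeasurable E /\
  exists g d : nat -> R, incr_to_one g /\ decr_to_zero d /\
    E `<=` \bigcup_k \bigcap_(n in [set n | (k <= n)%N]) Egd E (g n) (d n).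

(* Main.v *)
Require Import Defs.
From Stdlib Require Import PArith Lia.
From mathcomp Require Import all_boot all_order all_algebra all_classical all_reals all_analysis.
From mathcomp Require Import Rstruct Rstruct_topology borel_hierarchy.
From mathcomp Require Import lra ring zify.
Import Order.TTheory GRing.Theory Num.Theory.
Local Open Scope classical_set_scope.
Local Open Scope ring_scope.

Lemma leb_lm (A : set R) : leb A = lebesgue_measure A.
Proof. reflexivity. Qed.

Local Open Scope ereal_scope.
Lemma leb_ge0 (A : set R) : 0 <= leb A.
Proof. rewrite leb_lm; exact: outer_measure_ge0. Qed.
Lemma leb0 : leb set0 = 0.
Proof. rewrite leb_lm; exact: outer_measure0. Qed.
Lemma leb_mono {A B : set R} : A `<=` B -> leb A <= leb B.
Proof. move=> AB; rewrite !leb_lm; exact: le_outer_measure. Qed.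
Lemma leb_U2 (A B : set R) : leb (A `|` B) <= leb A + leb B.
Proof. rewrite !leb_lm; exact: outer_measureU2. Qed.
Lemma leb_split (A B : set R) : leb A <= leb (A `&` B) + leb (A `\` B).
Proof.
apply: le_trans (leb_U2 _ _); apply: leb_mono => x Ax.
by case: (pselect (B x)) => Bx; [left|right].
Qed.
Lemma leb_sigma (F : nat -> set R) : leb (\bigcup_n F n) <= \sum_(0 <= i <oo) leb (F i).
Proof. rewrite !leb_lm; exact: outer_measure_sigma_subadditive. Qed.
Lemma ereal_helper (X Y : \bar R) (r c d : R) :
  r%:E <= X + Y -> Y <= c%:E -> (c <= d)%R -> (r - d)%:E <= X.
Proof.
move=> h1 h2 h3; rewrite EFinB leeBlDr //; apply: le_trans h1 _.
apply: leeD => //; apply: le_trans h2 _; by rewrite lee_fin.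
Qed.
Local Close Scope ereal_scope.

Lemma set_oo (x y : R) : [set z | x < z /\ z < y] = `]x, y[%classic.
Proof. by apply/seteqP; split => z /=; rewrite in_itv /=; [case=> -> ->|case/andP => -> ->]. Qed.
Lemma set_cc (x y : R) : [set z | x <= z /\ z <= y] = `[x, y]%classic.
Proof. by apply/seteqP; split => z /=; rewrite in_itv /=; [case=> -> ->|case/andP => -> ->]. Qed.

Lemma leb_oo (x y : R) : x <= y -> leb [set z | x < z /\ z < y] = (y - x)%:E.
Proof.
move=> xy.
rewrite set_oo.
rewrite leb_lm lebesgue_measure_itv /= lte_fin.
case: ltP => h //=.
have -> : y = x by apply/eqP; rewrite eq_le xy h.
by rewrite subrr.
Qed.

Lemma leb_cc (x y : R) : x <= y -> leb [set z | x <= z /\ z <= y] = (y - x)%:E.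
Proof.
move=> xy.
rewrite set_cc.
rewrite leb_lm lebesgue_measure_itv /= lte_fin.
case: ltP => h //=.
have -> : y = x by apply/eqP; rewrite eq_le xy h.
by rewrite subrr.
Qed.

Lemma open_oo (x y : R) : open [set z | x < z /\ z < y].
Proof.
rewrite set_oo.
exact: interval_open.
Qed.

Lemma closed_cc (x y : R) : closed [set z | x <= z /\ z <= y].
Proof.
rewrite set_cc.
exact: interval_closed.
Qed.

Lemma closed_Lmeas (A : set R) : closed A -> Lmeasurable A.
Proof. move=> cA; rewrite /Lmeasurable. apply: sub_caratheodory. exact: measurable_realfun.closed_measurable. Qed.

Lemma Lmeas_bigcup (F : nat -> set R) : (forall n, Lmeasurable (F n)) -> Lmeasurable (\bigcup_n F n).
Proof. move=> h; rewrite /Lmeasurable. exact: bigcupT_measurable. Qed.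
Definition hh : R := 2^-1.
Lemma hh_gt0 : 0 < hh. Proof. rewrite /hh; lra. Qed.
Lemma hh_le1 : hh <= 1. Proof. rewrite /hh; lra. Qed.
Lemma hh2 : hh * 2 = 1. Proof. rewrite /hh; lra. Qed.
Lemma hhX_ge0 n : 0 <= hh ^+ n. Proof. exact/exprn_ge0/ltW/hh_gt0. Qed.
Lemma hhX_gt0 n : 0 < hh ^+ n. Proof. exact/exprn_gt0/hh_gt0. Qed.
Lemma hhX_le (m n : nat) : (m <= n)%N -> hh ^+ n <= hh ^+ m.
Proof. by move=> mn; apply: ler_wiXn2l => //; [exact/ltW/hh_gt0|exact: hh_le1]. Qed.
Lemma hhX_nat n : hh ^+ n = ((2 ^ n)%N%:R)^-1.
Proof. by rewrite /hh natrX exprVn. Qed.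
Lemma hhXS n : hh ^+ n.+1 = hh ^+ n / 2.
Proof. by rewrite exprS mulrC /hh. Qed.

Fixpoint dep (M : positive) : nat :=
  match M with xH => 0%N | xO M' => (dep M').+1 | xI M' => (dep M').+1 end.

Lemma dep_bound M : (2 ^ dep M <= Pos.to_nat M /\ Pos.to_nat M < 2 ^ (dep M).+1)%N.
Proof.
elim: M => [M [IH1 IH2]|M [IH1 IH2]|] /=.
- rewrite Pos2Nat.inj_xI !expnS; rewrite expnS in IH2. split; lia.
- rewrite Pos2Nat.inj_xO !expnS; rewrite expnS in IH2. split; lia.
- rewrite Pos2Nat.inj_1. split => //.
Qed.

Fixpoint anc (M N : positive) : Prop :=
  M = N \/ (match N with xH => False | xO N' => anc M N' | xI N' => anc M N' end).

Lemma anc_refl M : anc M M. Proof. by case: M => *; left. Qed.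
Lemma anc_root N : anc xH N.
Proof. by elim: N => [N IH|N IH|] /=; [right|right|left]. Qed.
Lemma anc_le M N : anc M N -> (Pos.to_nat M <= Pos.to_nat N)%N.
Proof.
elim: N => [N IH|N IH|] /= [->//|].
- move=> /IH; rewrite Pos2Nat.inj_xI; lia.
- move=> /IH; rewrite Pos2Nat.inj_xO; lia.
- by [].
Qed.
Lemma anc_antisym M N : anc M N -> anc N M -> M = N.
Proof.
move=> /anc_le h1 /anc_le h2; apply: Pos2Nat.inj; apply/eqP; rewrite eqn_leq h1 h2.
by [].
Qed.
Lemma anc_child M N : anc M N -> M <> N -> anc (xO M) N \/ anc (xI M) N.
Proof.
elim: N => [N IH|N IH|] /=.
- case=> [->//|h] MN; case: (Pos.eq_dec M N) => [->|MN'].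
    by right; left.
  by case: (IH h MN') => H; [left|right]; right.
- case=> [->//|h] MN; case: (Pos.eq_dec M N) => [->|MN'].
    by left; left.
  by case: (IH h MN') => H; [left|right]; right.
- by case.
Qed.

Section KSet.
Variables (a lam : R).
Hypothesis lam0 : 0 < lam.

Definition gsz (j : nat) : R := lam * hh ^+ (8 * 2 ^ j.+1).
Fixpoint LL (j : nat) : R := if j is j'.+1 then (LL j' - gsz j') / 2 else lam.

Lemma gsz_pos j : 0 < gsz j.
Proof. by rewrite /gsz mulr_gt0 // hhX_gt0. Qed.

Lemma gsz_small j : gsz j <= lam * hh ^+ (2 * j) / 2.
Proof.
rewrite /gsz -mulrA ler_pM2l // -hhXS; apply: hhX_le.
have := ltn_expl j.+1 (isT : (1 < 2)%N). rewrite expnS. lia.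
Qed.

Lemma LL_lb j : lam * hh ^+ (2 * j) <= LL j.
Proof.
elim: j => [|j IH] /=; first by rewrite muln0 expr0 mulr1.
have := gsz_small j.
have -> : (2 * j.+1 = (2 * j).+2)%N by lia.
rewrite !hhXS. lra.
Qed.

Lemma LL_pos j : 0 < LL j.
Proof. apply: lt_le_trans (LL_lb j); by rewrite mulr_gt0 // hhX_gt0. Qed.

Lemma gsz_le j : gsz j <= LL j / 2.
Proof. have := gsz_small j; have := LL_lb j; lra. Qed.

Lemma LL_S_le j : LL j.+1 <= LL j / 2.
Proof. have := gsz_pos j; rewrite /=; lra. Qed.
Lemma LL_S_lt j : LL j.+1 < LL j / 2.
Proof. have := gsz_pos j; rewrite /=; lra. Qed.
Lemma LL_S_ge j : LL j / 4 <= LL j.+1.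
Proof. have := gsz_le j; rewrite /=; lra. Qed.
Lemma LL_gap j : LL j - LL j.+1 - LL j.+1 = gsz j.
Proof. rewrite /=; lra. Qed.

Lemma LL_ub j : LL j <= lam * hh ^+ j.
Proof.
elim: j => [|j IH]; first by rewrite expr0 mulr1.
have := LL_S_le j; rewrite hhXS; lra.
Qed.
Lemma LL_le0 j : LL j <= lam.
Proof. have := LL_ub j; have := hhX_le 0 j; rewrite expr0 => h. 
have : lam * hh ^+ j <= lam by rewrite ger_pMr // h.
lra. Qed.


Arguments LL : simpl never.

Fixpoint pp (M : positive) : R :=
  match M with
  | xH => a
  | xO M' => pp M'
  | xI M' => pp M' + LL (dep M') - LL (dep M').+1
  end.

Definition block M : set R := [set x | pp M <= x /\ x <= pp M + LL (dep M)].
Definition gapS M : set R :=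
  [set x | pp M + LL (dep M).+1 < x /\ x < pp M + LL (dep M) - LL (dep M).+1].
Definition KK : set R := [set x | (a <= x /\ x <= a + lam) /\ forall M, ~ gapS M x].

Lemma block_xO M : block (xO M) `<=` block M.
Proof. move=> x [] /= h1 h2; have := LL_S_le (dep M); have := LL_pos (dep M).+1; split; lra. Qed.
Lemma block_xI M : block (xI M) `<=` block M.
Proof. move=> x [] /= h1 h2; have := LL_S_le (dep M); have := LL_pos (dep M).+1; split; lra. Qed.
Lemma block_anc M N : anc M N -> block N `<=` block M.
Proof.
elim: N => [N IH|N IH|] /= [->//|].
- by move=> /IH h; apply: subset_trans h; apply: block_xI.
- by move=> /IH h; apply: subset_trans h; apply: block_xO.
- by [].
Qed.
Lemma block_root : block xH = [set x | a <= x /\ x <= a + lam].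
Proof. by []. Qed.
Lemma block_sub M : block M `<=` [set x | a <= x /\ x <= a + lam].
Proof. rewrite -block_root; exact/block_anc/anc_root. Qed.
Lemma gap_block M : gapS M `<=` block M.
Proof. move=> x [] /= h1 h2; have := LL_pos (dep M).+1; split; lra. Qed.
Lemma gap_xO M x : gapS M x -> ~ block (xO M) x.
Proof. move=> [h1 h2] [h3 h4]; rewrite /= in h1 h2 h3 h4; lra. Qed.
Lemma gap_xI M x : gapS M x -> ~ block (xI M) x.
Proof. move=> [h1 h2] [h3 h4]; rewrite /= in h1 h2 h3 h4; lra. Qed.
Lemma child_disj M x : block (xO M) x -> ~ block (xI M) x.
Proof. move=> [h1 h2] [h3 h4]; rewrite /= in h1 h2 h3 h4; have := LL_S_lt (dep M); lra. Qed.
Lemma block_split M x : block M x -> ~ gapS M x -> block (xO M) x \/ block (xI M) x.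
Proof.
move=> [h1 h2] hg; rewrite /block /=.
have [h3|h3] := leP x (pp M + LL (dep M).+1); first by left.
right; split; last lra.
apply/negP => h4; apply: hg; split => //; rewrite ltNge; exact/negP.
Qed.

Lemma block_meet N M x : block M x -> block N x -> anc M N \/ anc N M.
Proof.
elim: N M => [N IH|N IH|] M bM bN /=.
- have [h|h] := IH M bM (@block_xI _ _ bN).
    by left; right.
  case: (Pos.eq_dec N M) => [<-|NM]; first by left; right; exact: anc_refl.
  have [h'|h'] := @anc_child _ _ h NM.
    by exfalso; apply: (@child_disj _ _ (@block_anc _ _ h' _ bM) bN).
  by right.
- have [h|h] := IH M bM (@block_xO _ _ bN).
    by left; right.
  case: (Pos.eq_dec N M) => [<-|NM]; first by left; right; exact: anc_refl.
  have [h'|h'] := @anc_child _ _ h NM.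
    by right.
  by exfalso; apply: (@child_disj _ _ bN (@block_anc _ _ h' _ bM)).
- by right; exact: anc_root.
Qed.

Lemma gap_anc N M x : block N x -> gapS M x -> anc N M.
Proof.
move=> bN gM; have [h|//] := @block_meet _ _ _ (gap_block _ _ gM) bN.
case: (Pos.eq_dec M N) => [->|MN]; first exact: anc_refl.
have [h'|h'] := @anc_child _ _ h MN.
  by exfalso; apply: (@gap_xO _ _ gM (@block_anc _ _ h' _ bN)).
by exfalso; apply: (@gap_xI _ _ gM (@block_anc _ _ h' _ bN)).
Qed.

Lemma gap_disj M M' x : gapS M x -> gapS M' x -> M = M'.
Proof.
move=> g1 g2; apply: anc_antisym.
  exact: (@gap_anc _ _ _ (gap_block _ _ g1) g2).
exact: (@gap_anc _ _ _ (gap_block _ _ g2) g1).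
Qed.

Lemma KK_blocks x : KK x -> forall n, exists N, dep N = n /\ block N x.
Proof.
move=> [[h1 h2] hK]; elim=> [|n [N [<- bN]]]; first by exists xH.
have [h|h] := @block_split _ _ bN (hK N).
  by exists (xO N).
by exists (xI N).
Qed.


Lemma LL0 : LL 0 = lam. Proof. by []. Qed.
Lemma LL_Sdef j : LL j.+1 = (LL j - gsz j) / 2. Proof. by []. Qed.

Lemma gsz_M M : gsz (dep M) <= lam * hh ^+ (8 * Pos.to_nat M).
Proof.
rewrite /gsz ler_pM2l //; apply: hhX_le; have := dep_bound M; lia.
Qed.

Lemma leb_gap M : leb (gapS M) = (gsz (dep M))%:E.
Proof.
rewrite /gapS leb_oo; first by congr (_%:E); rewrite -LL_gap; ring.
have := LL_gap (dep M); have := gsz_pos (dep M); lra.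
Qed.

Lemma loss N : (leb (block N `\` KK) <= (lam * hh ^+ (7 * Pos.to_nat N))%:E)%E.
Proof.
set eps := lam * hh ^+ (7 * Pos.to_nat N).
have eps0 : 0 <= eps by rewrite /eps mulr_ge0 ?hhX_ge0 // ltW.
pose G i := if (Pos.to_nat N <= i.+1)%N then gapS (Pos.of_succ_nat i) else set0.
have sub : block N `\` KK `<=` \bigcup_i G i.
  move=> x [bN nK]; have xab := block_sub _ _ bN.
  have [M gM] : exists M, gapS M x.
    apply: contrapT => hn; apply: nK; split => // M gM; apply: hn; by exists M.
  have hle := @anc_le _ _ (@gap_anc _ _ _ bN gM).
  have hM : Pos.of_succ_nat (Pos.to_nat M).-1 = M.
    apply: Pos2Nat.inj; rewrite SuccNat2Pos.id_succ; have := Pos2Nat.is_pos M; lia.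
  exists (Pos.to_nat M).-1 => //; rewrite /G hM ifT //.
  have := Pos2Nat.is_pos M; lia.
apply: le_trans (leb_mono sub) _; apply: le_trans (leb_sigma _) _.
apply: le_trans (epsilon_trick0 xpredT eps0).
apply: lee_nneseries => [i _ _|i _]; first exact: leb_ge0.
rewrite /G; case: ifP => hi; last by rewrite leb0 lee_fin divr_ge0.
rewrite leb_gap lee_fin; apply: le_trans (gsz_M _) _.
rewrite SuccNat2Pos.id_succ.
have -> : (8 * i.+1 = i.+1 + 7 * i.+1)%N by lia.
rewrite exprD /eps -hhX_nat.
rewrite -[X in _ <= X]mulrA [X in _ <= lam * X]mulrC ler_pM2l // ler_pM2l ?hhX_gt0 //.
apply: hhX_le; lia.
Qed.

Lemma KK_sub : KK `<=` [set x | a <= x /\ x <= a + lam].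
Proof. by move=> x []. Qed.

Lemma KK_pos : (0 < leb KK)%E.
Proof.
have h4 : hh ^+ 7 < 1.
  apply: le_lt_trans (@hhX_le 1 7 isT) _; rewrite expr1 /hh; lra.
have h5 : 0 < lam - lam * hh ^+ 7 by rewrite subr_gt0 gtr_pMr.
have h1 := leb_split (block xH) KK.
rewrite /block /= LL0 leb_cc in h1; last by rewrite lerDl ltW.
have h2 := loss xH; rewrite Pos2Nat.inj_1 muln1 in h2.
have h3 : (leb ([set x | (a <= x)%R /\ (x <= a + lam)%R] `&` KK) <= leb KK)%E by apply: leb_mono => x [].
apply: lt_le_trans (_ : (lam - lam * hh ^+ 7)%:E <= _)%E; first by rewrite lte_fin.
rewrite EFinB leeBlDr //.
have e : a + lam - a = lam by ring.
rewrite e in h1; rewrite /block /= LL0 in h2.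
apply: le_trans h1 _; exact: leeD.
Qed.

Lemma KK_closed : closed KK.
Proof.
have -> : KK = [set x | a <= x /\ x <= a + lam] `&` \bigcap_M (~` gapS M).
  apply/seteqP; split => x [h1 h2]; split => //.
    by move=> M _; apply: h2.
  by move=> M; apply: h2.
apply: closedI; first exact: closed_cc.
apply: closed_bigI => M _; apply: open_closedC; exact: open_oo.
Qed.

Lemma LL_small eps : 0 < eps -> exists n, LL n < eps.
Proof.
move=> e0; exists (Num.Def.archi_bound (lam / eps)).
apply: le_lt_trans (LL_ub _) _; rewrite hhX_nat.
set n := Num.Def.archi_bound _.
have h := @upper_nthrootP _ (lam / eps) n (leqnn _).
rewrite -natrX in h.
have h0 : 0 < ((2 ^ n)%N%:R : R) by rewrite ltr0n expn_gt0.
rewrite ltr_pdivrMr // mulrC -ltr_pdivrMr //.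
Qed.

Lemma KK_gaps_dense s t : a <= s -> s < t -> t <= a + lam ->
  exists M z, (s < z /\ z < t) /\ gapS M z.
Proof.
move=> hs st ht; set m := (s + t) / 2.
case: (pselect (KK m)) => Km.
  have [n Ln] : exists n, LL n < (t - s) / 2 by apply: LL_small; lra.
  have [N [dN bN]] := @KK_blocks _ Km n.
  exists N, (pp N + LL n / 2).
  move: bN; rewrite /block /gapS /= dN => -[b1 b2].
  have := LL_S_lt n; have := LL_pos n.+1.
  rewrite /m in b1 b2. split; split; lra.
have [M gM] : exists M, gapS M m.
  apply: contrapT => hn; apply: Km; split; first by rewrite /m; split; lra.
  by move=> M gM; apply: hn; exists M.
by exists M, m; split => //; rewrite /m; split; lra.
Qed.


Lemma find_level r : 0 < r -> 2 * r <= lam ->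
  exists m, 2 * r <= LL m /\ LL m.+1 < 2 * r.
Proof.
move=> r0 hr; have [J hJ] := @LL_small (2 * r) (ltac:(lra)).
elim: J hJ => [|J IH] hJ; first by rewrite LL0 in hJ; lra.
case: (ltP (LL J) (2 * r)) => h; first exact: IH.
by exists J.
Qed.

Lemma KK_density n x r : KK x -> 0 < r -> r <= lam * hh ^+ (2 * n) / 8 ->
  (((1 - hh ^+ n.+1) * r)%:E <= leb ([set z | (x < z)%R /\ (z < x + r)%R] `&` KK))%E \/
  (((1 - hh ^+ n.+1) * r)%:E <= leb ([set z | (x - r < z)%R /\ (z < x)%R] `&` KK))%E.
Proof.
move=> Kx r0 hr.
have hn1 : hh ^+ (2 * n) <= 1 by have := @hhX_le 0 (2 * n) isT; rewrite expr0.
have hlr : lam * hh ^+ (2 * n) <= lam by rewrite ger_pMr.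
have [m [m1 m2]] := @find_level r r0 (ltac:(lra)).
have mn : (n < m)%N.
  rewrite ltnNge; apply/negP => mn.
  have h1 := LL_lb m.+1.
  have h2 : lam * hh ^+ (2 * n.+1) <= lam * hh ^+ (2 * m.+1).
    by rewrite ler_pM2l //; apply: hhX_le; lia.
  have e : (2 * n.+1 = (2 * n).+2)%N by lia.
  have e3 : hh ^+ (2 * n.+1) = hh ^+ (2 * n) / 4 by rewrite e !hhXS; lra.
  rewrite e3 in h2.
  lra.
have [N [dN bN]] := @KK_blocks _ Kx m.
have dNb := dep_bound N; rewrite dN in dNb.
have key : lam * hh ^+ (7 * Pos.to_nat N) <= hh ^+ n.+1 * r.
  have e1 : lam * hh ^+ (2 * m.+1) / 2 < r by have := LL_lb m.+1; lra.
  have e2 : hh ^+ (7 * Pos.to_nat N) <= hh ^+ (n.+1 + (2 * m.+1).+1).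
    apply: hhX_le; have := ltn_expl m (isT : (1 < 2)%N); lia.
  rewrite exprD [hh ^+ (2 * m.+1).+1]hhXS in e2.
  have B0 := hhX_ge0 n.+1.
  have p1 : lam * hh ^+ (7 * Pos.to_nat N) <= lam * (hh ^+ n.+1 * (hh ^+ (2 * m.+1) / 2)).
    by rewrite ler_pM2l.
  have p2 : hh ^+ n.+1 * (lam * hh ^+ (2 * m.+1) / 2) <= hh ^+ n.+1 * r.
    by apply: ler_wpM2l => //; apply: ltW.
  lra.
have hloss := loss N.
move: bN; rewrite /block /= dN => -[b1 b2].
have e : (1 - hh ^+ n.+1) * r = r - hh ^+ n.+1 * r by ring.
rewrite e.
case: (leP (LL m / 2) (x - pp N)) => hs.
- right; set I := [set z | x - r < z /\ z < x].
  have IsubB : I `<=` block N by move=> z [z1 z2]; rewrite /block /= dN; split; lra.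
  have h1 := leb_split I KK.
  have e2 : x - (x - r) = r by ring.
  rewrite /I leb_oo ?e2 in h1; last lra.
  have h2 : (leb (I `\` KK) <= leb (block N `\` KK))%E.
    by apply: leb_mono => z [Iz nK]; split => //; exact: IsubB.
  exact: (@ereal_helper _ _ _ _ _ h1 (le_trans h2 hloss) key).
- left; set I := [set z | x < z /\ z < x + r].
  have IsubB : I `<=` block N by move=> z [z1 z2]; rewrite /block /= dN; split; lra.
  have h1 := leb_split I KK.
  have e2 : x + r - x = r by ring.
  rewrite /I leb_oo ?e2 in h1; last lra.
  have h2 : (leb (I `\` KK) <= leb (block N `\` KK))%E.
    by apply: leb_mono => z [Iz nK]; split => //; exact: IsubB.
  exact: (@ereal_helper _ _ _ _ _ h1 (le_trans h2 hloss) key).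
Qed.

End KSet.

Lemma hh_small eps : 0 < eps -> exists d, hh ^+ d < eps.
Proof.
move=> e0; exists (Num.Def.archi_bound (1 / eps)).
rewrite hhX_nat; set n := Num.Def.archi_bound _.
have h := @upper_nthrootP _ (1 / eps) n (leqnn _).
rewrite -natrX in h.
have h0 : 0 < ((2 ^ n)%N%:R : R) by rewrite ltr0n expn_gt0.
rewrite -[X in X < _]mul1r ltr_pdivrMr // mulrC -ltr_pdivrMr //.
Qed.

Definition cfac (Q : seq nat) : R := hh ^+ (pickle Q).+3.

Lemma cfac_pos Q : 0 < cfac Q. Proof. exact: hhX_gt0. Qed.
Lemma cfac_le Q : cfac Q <= 1 / 8.
Proof.
apply: le_trans (@hhX_le 3 (pickle Q).+3 _) _; first by [].
by rewrite !hhXS expr0; lra.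
Qed.

Definition child (Q : seq nat) (l u : R) (i : nat) : R * R :=
  let lam := cfac Q * (u - l) in
  let a := (l + u) / 2 - lam / 2 in
  match i with
  | 0%N => (l, a)
  | 1%N => (a + lam, u)
  | k.+2 => let M := Pos.of_succ_nat k in
            (pp a lam M + LL lam (dep M).+1, pp a lam M + LL lam (dep M) - LL lam (dep M).+1)
  end.

Fixpoint nd (Q : seq nat) : R * R :=
  match Q with [::] => (0, 1) | i :: Q' => child Q' (nd Q').1 (nd Q').2 i end.

Definition lo Q := (nd Q).1.
Definition hi Q := (nd Q).2.
Definition hl Q := cfac Q * (hi Q - lo Q).
Definition ha Q := (lo Q + hi Q) / 2 - hl Q / 2.
Definition FI Q : set R := [set x | lo Q < x /\ x < hi Q].
Definition CC Q : set R := KK (ha Q) (hl Q).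

Lemma lo_cons0 Q : lo (0%N :: Q) = lo Q. Proof. by []. Qed.
Lemma hi_cons0 Q : hi (0%N :: Q) = ha Q. Proof. by []. Qed.
Lemma lo_cons1 Q : lo (1%N :: Q) = ha Q + hl Q. Proof. by []. Qed.
Lemma hi_cons1 Q : hi (1%N :: Q) = hi Q. Proof. by []. Qed.
Lemma lo_cons2 Q k : lo (k.+2 :: Q) =
  pp (ha Q) (hl Q) (Pos.of_succ_nat k) + LL (hl Q) (dep (Pos.of_succ_nat k)).+1.
Proof. by []. Qed.
Lemma hi_cons2 Q k : hi (k.+2 :: Q) =
  pp (ha Q) (hl Q) (Pos.of_succ_nat k) + LL (hl Q) (dep (Pos.of_succ_nat k))
    - LL (hl Q) (dep (Pos.of_succ_nat k)).+1.
Proof. by []. Qed.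
Lemma FI_cons2 Q k : FI (k.+2 :: Q) = gapS (ha Q) (hl Q) (Pos.of_succ_nat k).
Proof. by []. Qed.

Lemma nd_lt Q : lo Q < hi Q.
Proof.
elim: Q => [|i Q IH]; first by rewrite /lo /hi /=; lra.
have c0 := cfac_pos Q; have c1 := cfac_le Q.
have hl0 : 0 < hl Q by rewrite /hl mulr_gt0 // subr_gt0.
have hl1 : hl Q <= (hi Q - lo Q) / 8.
  have d0 : 0 < hi Q - lo Q by rewrite subr_gt0.
  rewrite /hl; have := ler_wpM2r (ltW d0) c1; lra.
case: i => [|[|k]].
- rewrite lo_cons0 hi_cons0 /ha; lra.
- rewrite lo_cons1 hi_cons1 /ha; lra.
- rewrite lo_cons2 hi_cons2; have := LL_gap (hl Q) (dep (Pos.of_succ_nat k)).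
  have := gsz_pos (hl Q) hl0 (dep (Pos.of_succ_nat k)); lra.
Qed.

Lemma hl_pos Q : 0 < hl Q.
Proof. by rewrite /hl mulr_gt0 ?cfac_pos // subr_gt0 nd_lt. Qed.
Lemma hl_le Q : hl Q <= (hi Q - lo Q) / 8.
Proof.
have h := nd_lt Q; have c1 := cfac_le Q.
have d0 : 0 < hi Q - lo Q by rewrite subr_gt0.
rewrite /hl; have := ler_wpM2r (ltW d0) c1; lra.
Qed.
Lemma ha_bounds Q : lo Q < ha Q /\ ha Q + hl Q < hi Q.
Proof. have := hl_le Q; have := hl_pos Q; have := nd_lt Q; rewrite /ha; split; lra. Qed.

Lemma block_ends a lam M : 0 < lam ->
  a <= pp a lam M /\ pp a lam M + LL lam (dep M) <= a + lam.
Proof.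
move=> lam0; have hL := LL_pos lam lam0 (dep M).
have h1 : block a lam M (pp a lam M) by rewrite /block /=; split; lra.
have h2 : block a lam M (pp a lam M + LL lam (dep M)) by rewrite /block /=; split; lra.
have [h11 _] := @block_sub _ _ lam0 _ _ h1.
have [_ h22] := @block_sub _ _ lam0 _ _ h2.
by split.
Qed.

Lemma child_bounds Q i : lo Q <= lo (i :: Q) /\ hi (i :: Q) <= hi Q /\
  hi (i :: Q) - lo (i :: Q) <= (hi Q - lo Q) / 2.
Proof.
have [hb1 hb2] := ha_bounds Q; have hl0 := hl_pos Q; have hl1 := hl_le Q.
have hlt := nd_lt Q.
case: i => [|[|k]].
- rewrite lo_cons0 hi_cons0; split; [lra|split]; rewrite /ha; lra.
- rewrite lo_cons1 hi_cons1; split; [lra|split]; rewrite /ha; lra.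
- rewrite lo_cons2 hi_cons2; set M := Pos.of_succ_nat k.
  have [e1 e2] := @block_ends (ha Q) (hl Q) M hl0.
  have g1 := LL_gap (hl Q) (dep M); have g2 := gsz_le (hl Q) hl0 (dep M).
  have g3 := LL_le0 (hl Q) hl0 (dep M); have g4 := LL_pos (hl Q) hl0 (dep M).+1.
  split; [lra|split; lra].
Qed.

Lemma nd_len Q : hi Q - lo Q <= hh ^+ (size Q).
Proof.
elim: Q => [|i Q IH] /=; first by rewrite expr0 /lo /hi /=; lra.
have [_ [_ h]] := child_bounds Q i; rewrite hhXS; lra.
Qed.

Lemma nd_suffix S Q : lo Q <= lo (S ++ Q) /\ hi (S ++ Q) <= hi Q.
Proof.
elim: S => [|i S [IH1 IH2]] /=; first by split; lra.
have [h1 [h2 _]] := child_bounds (S ++ Q) i; split; lra.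
Qed.

Lemma FI_suffix S Q : FI (S ++ Q) `<=` FI Q.
Proof. move=> x [h1 h2]; have [e1 e2] := nd_suffix S Q; split; lra. Qed.

Lemma CC_FI Q : CC Q `<=` FI Q.
Proof.
move=> x /(@KK_sub _ _ x) [h1 h2]; have [e1 e2] := ha_bounds Q.
rewrite /FI /=; split; lra.
Qed.

Lemma CC_child_disj Q i x : CC Q x -> ~ FI (i :: Q) x.
Proof.
move=> Cx; have [[h1 h2] hK] := Cx.
case: i => [|[|k]].
- by rewrite /FI lo_cons0 hi_cons0 /= => -[_ ?]; lra.
- by rewrite /FI lo_cons1 hi_cons1 /= => -[? _]; lra.
- by rewrite FI_cons2; apply: hK.
Qed.

Lemma gap_in_hull a lam M x : 0 < lam -> gapS a lam M x -> a <= x /\ x <= a + lam.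
Proof. move=> lam0 g; exact: (@block_sub _ _ lam0 _ _ (@gap_block _ _ lam0 _ _ g)). Qed.

Lemma childFI_disj Q i j x : i <> j -> FI (i :: Q) x -> ~ FI (j :: Q) x.
Proof.
have hl0 := hl_pos Q.
have hint k : FI (k.+2 :: Q) x -> ha Q <= x /\ x <= ha Q + hl Q.
  by rewrite FI_cons2 => /(@gap_in_hull _ _ _ _ hl0).
case: i => [|[|k]]; case: j => [|[|k']] //= ij.
- by rewrite /FI lo_cons0 hi_cons0 lo_cons1 /= => -[_ ?] [? _]; have := hl_pos Q; lra.
- by move=> [_ h1] /hint [h2 _]; rewrite hi_cons0 in h1; lra.
- by rewrite /FI lo_cons0 hi_cons0 lo_cons1 /= => -[? _] [_ ?]; have := hl_pos Q; lra.
- by move=> [h1 _] /hint [_ h2]; rewrite lo_cons1 in h1; lra.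
- by move=> /hint [h2 _] [_ h1]; rewrite hi_cons0 in h1; lra.
- by move=> /hint [_ h2] [h1 _]; rewrite lo_cons1 in h1; lra.
- rewrite !FI_cons2 => g1 g2; apply: ij.
  have e := @gap_disj _ _ hl0 _ _ _ g1 g2.
  have : Pos.to_nat (Pos.of_succ_nat k) = Pos.to_nat (Pos.of_succ_nat k') by rewrite e.
  rewrite !SuccNat2Pos.id_succ; by case=> ->.
Qed.

Lemma laminar P Q x : CC P x -> FI Q x -> exists S, P = S ++ Q.
Proof.
move=> CPx; elim: Q => [|q Q IH] FQx; first by exists P; rewrite cats0.
have [S PS] : exists S, P = S ++ Q.
  apply: IH; have [h1 [h2 _]] := child_bounds Q q; move: FQx => [e1 e2]; split; lra.
case/lastP: S PS => [|S p] PS.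
  by exfalso; rewrite /= in PS; rewrite PS in CPx; exact: (@CC_child_disj _ _ _ CPx FQx).
rewrite cat_rcons in PS.
have FP : FI (p :: Q) x.
  by apply: (FI_suffix S); rewrite -PS; exact: CC_FI.
case: (eqVneq p q) => [pq|pq].
  by exists S; rewrite PS pq.
have pq' : p <> q by apply/eqP.
by exfalso; apply: (@childFI_disj _ _ _ _ pq' FP FQx).
Qed.

Definition Cn (n : nat) : set R :=
  if (pickle_inv n : option (seq nat)) is Some Q then CC Q else set0.
Definition EE : set R := \bigcup_n Cn n.

Lemma CC_EE Q : CC Q `<=` EE.
Proof. by move=> x h; exists (pickle Q) => //; rewrite /Cn pickleK_inv. Qed.

Lemma EE_ex x : EE x -> exists Q, CC Q x.
Proof. by move=> [n _]; rewrite /Cn; case: pickle_inv => [Q|] // h; exists Q. Qed.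

Lemma Cn_closed n : closed (Cn n).
Proof. by rewrite /Cn; case: pickle_inv => [Q|]; [exact: KK_closed|exact: closed0]. Qed.

Lemma EE_Fsigma : Fsigma EE.
Proof. by exists Cn; [exact: Cn_closed|]. Qed.

Lemma EE_meas : Lmeasurable EE.
Proof. apply: Lmeas_bigcup => n; apply: closed_Lmeas; exact: Cn_closed. Qed.

Lemma leb_CC P : (leb (CC P) <= (hl P)%:E)%E.
Proof.
have hl0 := hl_pos P.
apply: le_trans (leb_mono (@KK_sub _ _)) _.
rewrite leb_cc; last lra.
by rewrite lee_fin; lra.
Qed.

Lemma EE_near_gap Q : (leb (EE `&` FI Q) <= ((hi Q - lo Q) / 4)%:E)%E.
Proof.
have len0 : 0 <= (hi Q - lo Q) / 4 by have := nd_lt Q; lra.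
have -> : EE `&` FI Q = \bigcup_n (Cn n `&` FI Q) by rewrite /EE setI_bigcupl.
apply: le_trans (leb_sigma _) _.
apply: le_trans (epsilon_trick0 xpredT len0).
apply: lee_nneseries => [n _ _|n _]; first exact: leb_ge0.
have hD : 0 <= ((2 ^ n.+1)%N%:R : R)^-1 by rewrite invr_ge0 ler0n.
rewrite /Cn; case E: (pickle_inv n) => [P|]; last first.
  by rewrite set0I leb0 lee_fin mulr_ge0.
case: (pselect (exists x, CC P x /\ FI Q x)) => [[x [h1 h2]]|hno]; last first.
  have -> : CC P `&` FI Q = set0.
    by apply/seteqP; split => // y [h1 h2]; apply: hno; exists y.
  by rewrite leb0 lee_fin mulr_ge0.
have [S PS] := @laminar _ _ _ h1 h2.
have pn : pickle P = n by have := @pickle_invK (seq nat) n; rewrite E.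
apply: le_trans (leb_mono (@subIsetl _ _ _)) _.
apply: le_trans (leb_CC P) _; rewrite lee_fin /hl /cfac pn.
have e : hh ^+ n.+3 = hh ^+ n.+1 / 4 by rewrite !hhXS; lra.
rewrite e hhX_nat.
have [s1 s2] := nd_suffix S Q; rewrite -PS in s1 s2.
have p : ((2 ^ n.+1)%N%:R)^-1 * (hi P - lo P) <= ((2 ^ n.+1)%N%:R)^-1 * (hi Q - lo Q).
  by apply: ler_wpM2l => //; lra.
lra.
Qed.

Lemma meet_child Q s t : lo Q <= s -> s < t -> t <= hi Q ->
  exists i, lo (i :: Q) < t /\ s < hi (i :: Q).
Proof.
move=> h1 h2 h3; have hl0 := hl_pos Q; have [b1 b2] := ha_bounds Q.
case: (ltP s (ha Q)) => c1.
  by exists 0%N; rewrite lo_cons0 hi_cons0; split; lra.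
case: (ltP (ha Q + hl Q) t) => c2.
  by exists 1%N; rewrite lo_cons1 hi_cons1; split; lra.
have [M [z [[z1 z2] gz]]] := @KK_gaps_dense (ha Q) (hl Q) hl0 s t c1 h2 c2.
have hM : Pos.of_succ_nat (Pos.to_nat M).-1 = M.
  apply: Pos2Nat.inj; rewrite SuccNat2Pos.id_succ; have := Pos2Nat.is_pos M; lia.
exists (Pos.to_nat M).-1.+2.
move: gz; rewrite /gapS => -[g1 g2].
rewrite lo_cons2 hi_cons2 hM; split; lra.
Qed.

Lemma node_in s t k : 0 <= s -> s < t -> t <= 1 ->
  exists Q, s <= lo Q /\ hi Q <= t /\ hi Q - lo Q <= hh ^+ k.
Proof.
move=> h0 h1 h2; set m := (s + t) / 2; set e := (t - s) / 4.
have e0 : 0 < e by rewrite /e; lra.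
have claim : forall d, exists Q, size Q = d /\ lo Q < m + e /\ m - e < hi Q.
  elim=> [|d [Q [sQ [q1 q2]]]].
    by exists [::]; rewrite /lo /hi /= /m /e; split => //; split; lra.
  have hlt := nd_lt Q.
  have [s' [s1 [s2 s3]]] : exists s', lo Q <= s' /\ m - e <= s' /\ s' < m + e /\ s' < hi Q.
    case: (leP (lo Q) (m - e)) => c; first by exists (m - e); split; lra.
    by exists (lo Q); split; lra.
  have [t' [t1 [t2 [t3 t4]]]] : exists t', t' <= hi Q /\ t' <= m + e /\ s' < t' /\ m - e < t'.
    case: (leP (hi Q) (m + e)) => c; first by exists (hi Q); split; lra.
    by exists (m + e); split; lra.
  have [i [i1 i2]] := @meet_child Q s' t' s1 t3 t1.
  by exists (i :: Q); split; [rewrite /= sQ|split; lra].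
have [d0 hd0] := @hh_small e e0.
have [Q [sQ [q1 q2]]] := claim (k + d0)%N.
have hl := nd_len Q; rewrite sQ in hl.
have l1 := @hhX_le k (k + d0) (leq_addr _ _).
have l2 := @hhX_le d0 (k + d0) (leq_addl _ _).
exists Q; rewrite /m /e in q1 q2 hd0; split; [|split]; lra.
Qed.

Lemma EE_pos_in s t : 0 <= s -> s < t -> t <= 1 ->
  (0 < leb (EE `&` [set z | (s < z)%R /\ (z < t)%R]))%E.
Proof.
move=> h0 h1 h2; have [Q [q1 [q2 _]]] := @node_in s t 0 h0 h1 h2.
apply: lt_le_trans (@KK_pos (ha Q) (hl Q) (hl_pos Q)) _.
apply: leb_mono => x Cx; split; first exact: (@CC_EE Q x Cx).
by have [e1 e2] := @CC_FI Q x Cx; split; lra.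
Qed.

Definition gseq (n : nat) : R := 1 - hh ^+ n.+1.
Definition dseq (n : nat) : R := hh ^+ (4 * n) / 8.

Lemma gseq_cvg : gseq @ \oo --> (1:R).
Proof.
pose g' : nat -> R^o := gseq.
have h : g' @ \oo --> (1 : R^o).
  apply/cvgrPdist_lt => eps e0.
  have [k hk] := @hh_small eps e0.
  exists k => // n /= kn.
  have e : 1 - gseq n = hh ^+ n.+1 by rewrite /gseq; ring.
  rewrite /g' e ger0_norm ?hhX_ge0 //.
  apply: le_lt_trans hk; apply: hhX_le; lia.
exact: h.
Qed.

Lemma dseq_cvg : dseq @ \oo --> (0:R).
Proof.
pose g' : nat -> R^o := dseq.
have h : g' @ \oo --> (0 : R^o).
  apply/cvgrPdist_lt => eps e0.
  have [k hk] := @hh_small eps e0.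
  exists k => // n /= kn.
  have e : 0 - dseq n = - (hh ^+ (4 * n) / 8) by rewrite /dseq; ring.
  rewrite /g' e normrN ger0_norm ?divr_ge0 ?hhX_ge0 //.
  have := @hhX_le k (4 * n) (ltac:(lia)); have := hhX_ge0 (4 * n); lra.
exact: h.
Qed.

Lemma gseq_incr : incr_to_one gseq.
Proof.
split; [move=> n|split; [move=> m n mn|exact: gseq_cvg]].
  rewrite /gseq subr_gt0; apply: le_lt_trans (@hhX_le 1 n.+1 isT) _.
  rewrite expr1 /hh; lra.
by rewrite /gseq lerD2l lerN2; apply: hhX_le.
Qed.

Lemma dseq_decr : decr_to_zero dseq.
Proof.
split; [move=> n|split; [move=> m n mn|exact: dseq_cvg]].
  by rewrite /dseq divr_gt0 // hhX_gt0.
rewrite /dseq ler_pM2r //; apply: hhX_le; lia.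
Qed.

Lemma EE_SUDT : SUDT EE.
Proof.
split; first exact: EE_meas.
exists gseq, dseq; split; first exact: gseq_incr.
split; first exact: dseq_decr.
move=> x /EE_ex [Q CQx].
have hl0 := hl_pos Q.
have [k hk] := @hh_small (hl Q) hl0.
exists k => // n /= kn r r0 rd.
have h2n : hh ^+ (2 * n) <= hl Q.
  apply: le_trans (ltW hk); apply: hhX_le; lia.
have hr : r <= hl Q * hh ^+ (2 * n) / 8.
  have e : hh ^+ (4 * n) = hh ^+ (2 * n) * hh ^+ (2 * n).
    by rewrite -exprD; congr (_ ^+ _); lia.
  move: rd; rewrite /dseq e => rd.
  have := ler_wpM2r (hhX_ge0 (2 * n)) h2n; lra.
have rinv : (0 <= (r^-1)%:E)%E by rewrite lee_fin invr_ge0 ltW.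
have key : forall A : set R, (((1 - hh ^+ n.+1) * r)%:E <= leb (A `&` CC Q))%E ->
    ((gseq n)%:E <= leb (A `&` EE) * (r^-1)%:E)%E.
  move=> A hA.
  have -> : gseq n = (1 - hh ^+ n.+1) * r * r^-1 by rewrite -mulrA divff ?mulr1 // gt_eqF.
  rewrite EFinM; apply: lee_wpmul2r => //; apply: le_trans hA _.
  by apply: leb_mono => y [Ay Cy]; split => //; exact: (@CC_EE Q y Cy).
have [h|h] := @KK_density (ha Q) (hl Q) hl0 n x r CQx r0 hr.
  by rewrite le_max; apply/orP; right; rewrite -set_oo; apply: key.
by rewrite le_max; apply/orP; left; rewrite -set_oo; apply: key.
Qed.

Definition win Q : set R :=
  [set x | (lo Q + hi Q) / 2 - (hi Q - lo Q) / 8 < x /\ x < (lo Q + hi Q) / 2 + (hi Q - lo Q) / 8].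
Definition Wk (k : nat) : set R := \bigcup_(Q in [set Q | hi Q - lo Q <= hh ^+ k]) win Q.
Definition Dom : set R := [set x | 0 <= x /\ x <= 1].

Lemma open_Wk k : open (Wk k).
Proof. by apply: bigcup_open => Q _; exact: open_oo. Qed.

Lemma open_nDom : open (~` Dom).
Proof. apply: closed_openC; exact: closed_cc. Qed.

Lemma open_sub_itv (D : set R) : open D -> D !=set0 ->
  (D `&` ~` Dom) !=set0 \/ exists s t, 0 <= s /\ s < t /\ t <= 1 /\
     [set z | s < z /\ z < t] `<=` D.
Proof.
move=> oD [z Dz].
case: (pselect (Dom z)) => Domz; last by left; exists z.
right.
have := oD z Dz; rewrite /= => /nbhs_ballP [e /= e0 ballD].
have [z0 z1] := Domz.
set e' := Num.min (e / 2) (1 / 2).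
have e'0 : 0 < e' by rewrite lt_min; apply/andP; split; lra.
have e'1 : e' <= e / 2 by rewrite ge_min lexx.
have e'2 : e' <= 1 / 2 by rewrite ge_min lexx orbT.
have sub : forall s t, z - e' <= s -> t <= z + e' -> [set w | s < w /\ w < t] `<=` D.
  move=> s t hs ht w [w1 w2]; apply: ballD.
  rewrite /ball /= ltr_distlC; apply/andP; split; lra.
case: (leP e' z) => c.
  exists (z - e'), z; split; [lra|split; [lra|split; [lra|]]].
  by apply: sub; lra.
exists z, (z + e'); split; [lra|split; [lra|split; [lra|]]].
by apply: sub; lra.
Qed.

Lemma null_parts (E Et : set R) : leb ((E `\` Et) `|` (Et `\` E)) = 0%E ->
  leb (E `\` Et) = 0%E /\ leb (Et `\` E) = 0%E.
Proof.
move=> h; split; apply/eqP; rewrite eq_le leb_ge0 andbT -h; apply: leb_mono => x hx.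
  by left. by right.
Qed.

Lemma transfer (A B C : set R) : leb (B `\` C) = 0%E -> (leb (A `&` B) <= leb (A `&` C))%E.
Proof.
move=> h; apply: le_trans (leb_split (A `&` B) C) _.
have -> : leb ((A `&` B) `\` C) = 0%E.
  apply/eqP; rewrite eq_le leb_ge0 andbT -h; apply: leb_mono => x [[_ Bx] Cx]; by split.
rewrite adde0; apply: leb_mono => x [[Ax Bx] Cx]; by split.
Qed.

Lemma leb_nonempty (A : set R) : (0 < leb A)%E -> exists x, A x.
Proof.
move=> h; apply: contrapT => hn.
have : A = set0 by apply/seteqP; split => // x Ax; apply: hn; exists x.
by move=> A0; rewrite A0 leb0 ltxx in h.
Qed.

Lemma absurd34 (x : R) : 3 / 4 < x -> x <= 2 / 3 -> False.
Proof. move=> h1 h2; lra. Qed.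

Theorem theorem1p4 :
  exists E : set R, Fsigma E /\ SUDT E /\
    forall Et : set R, Gdelta Et ->
      leb ((E `\` Et) `|` (Et `\` E)) = 0%E -> ~ UDT Et.
Proof.
exists EE; split; first exact: EE_Fsigma.
split; first exact: EE_SUDT.
move=> Et [U oU EtU] hnull [_ [g [d [[g0 [ghomo gcvg]] [[d0 [dhomo dcvg]] hsub]]]]].
have [n1 n2] := @null_parts _ _ hnull.
pose Fb n := (U n `|` ~` Dom) `&` (Wk n `|` ~` Dom).
have oF : forall n, open (Fb n) /\ dense (Fb n).
  move=> n.
  have o1 : open (U n `|` ~` Dom) by apply: openU; [exact: oU|exact: open_nDom].
  have o2 : open (Wk n `|` ~` Dom) by apply: openU; [exact: open_Wk|exact: open_nDom].
  split; first exact: openI.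
  apply: denseI => //.
  - move=> D D0 oD.
    have [[z [Dz nz]]|[s [t [s0 [st [t1 sub]]]]]] := @open_sub_itv D oD D0.
      by exists z; split => //; right.
    have hp := @EE_pos_in s t s0 st t1.
    have hp' : (0 < leb ([set z | (s < z)%R /\ (z < t)%R] `&` Et))%E.
      by apply: lt_le_trans hp _; rewrite setIC; exact: transfer.
    have [w [Iw Etw]] := @leb_nonempty _ hp'.
    exists w; split; first exact: sub.
    by left; move: Etw; rewrite EtU; apply.
  - move=> D D0 oD.
    have [[z [Dz nz]]|[s [t [s0 [st [t1 sub]]]]]] := @open_sub_itv D oD D0.
      by exists z; split => //; right.
    have [Q [q1 [q2 q3]]] := @node_in s t n s0 st t1.
    have hlt := nd_lt Q.
    exists ((lo Q + hi Q) / 2); split; first by apply: sub; split; lra.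
    left; exists Q => //; rewrite /win /=; split; lra.
have hB := @Baire _ R^o Fb oF.
have [y [[y0 y1] yF]] : exists y, (0 < y /\ y < 1) /\ (\bigcap_n Fb n) y.
  have ne : [set z : R | 0 < z /\ z < 1] !=set0 by exists (1 / 2); split; lra.
  have [y [hy1 hy2]] := hB _ ne (open_oo 0 1).
  by exists y.
have yDom : Dom y by split; lra.
have yEt : Et y.
  rewrite EtU => n _; have [[h|h] _] := yF n I; [exact: h|by []].
have yW : forall n, Wk n y.
  move=> n; have [_ [h|h]] := yF n I; [exact: h|by []].
have [k0 hk0] : exists k0, forall n, (k0 <= n)%N -> 3 / 4 < g n.
  pose g' : nat -> R^o := g.
  have h : g' @ \oo --> (1 : R^o) := gcvg.
  have q0 : (0 : R) < 1 / 4 by lra.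
  move/cvgrPdist_lt: h => /(_ (1 / 4) q0) [k0 _ hk0].
  exists k0 => n kn; have := hk0 n kn; rewrite /g' /= => hn.
  rewrite ltr_norml in hn; move/andP: hn => [hn1 hn2]; lra.
have [n kn hy] := hsub y yEt k0 I.
have dn := d0 n.
have [k hk] := @hh_small (d n) dn.
have [Q hQ0 wy] := yW k.
have hQ : hi Q - lo Q <= hh ^+ k := hQ0.
have hlt := nd_lt Q.
set len := hi Q - lo Q.
have len0 : 0 < len by rewrite /len; lra.
set r := 3 * len / 8.
have r0 : 0 < r by rewrite /r; lra.
have rd : r <= d n by rewrite /r /len in hQ *; lra.
have gn := hk0 n kn.
have := hy r r0 rd.
rewrite -!set_oo.
have rinv : (0 <= (r^-1)%:E)%E by rewrite lee_fin invr_ge0 ltW.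
have e23 : len / 4 * r^-1 = 2 / 3 by rewrite /r; field; rewrite gt_eqF.
have bnd : forall A, A `<=` FI Q -> (leb (A `&` Et) * (r^-1)%:E <= (2 / 3)%:E)%E.
  move=> A AF.
  have h1 : (leb (A `&` Et) <= leb (A `&` EE))%E by apply: transfer.
  have h2 : (leb (A `&` EE) <= leb (EE `&` FI Q))%E.
    by apply: leb_mono => x [Ax Ex]; split => //; exact: AF.
  have h3 := EE_near_gap Q.
  apply: le_trans (lee_wpmul2r rinv (le_trans h1 (le_trans h2 h3))) _.
  by rewrite -EFinM -/len e23.
move: wy; rewrite /win /= => -[w1 w2].
have L : [set z | (y - r < z)%R /\ (z < y)%R] `<=` FI Q.
  by move=> z [z1 z2]; rewrite /FI /=; rewrite /r /len in z1; split; lra.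
have Rt : [set z | (y < z)%R /\ (z < y + r)%R] `<=` FI Q.
  by move=> z [z1 z2]; rewrite /FI /=; rewrite /r /len in z2; split; lra.
move=> hmax.
have hle : ((g n)%:E <= (2 / 3)%:E)%E.
  apply: le_trans hmax _; rewrite ge_max; apply/andP; split; exact: bnd.
rewrite lee_fin in hle; exact: (@absurd34 _ gn hle).
Qed.
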